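(* Let $K$ be an algebraically closed field, let $k\geq0$ be an integer, let $Q$ be the cyclic quiver with vertices $0,1,\dots,k$ and arrows $a_i:i\to i+1$ for $i<k$ and $a_k:k\to0$, and let $M_{\omega_1}$ be the $KQ$-module defined in the context. Then $\mathrm{Ext}^1_{KQ}\big(M_{\omega_1},\bigoplus_{\omega_1}KQ\big)\neq0$, where $\bigoplus_{\omega_1}KQ$ is the direct sum of $\omega_1$ copies of $KQ$.
   Context: Paths in a quiver are composable sequences of arrows written left to right, with trivial paths $e_v$; the path algebra $KQ$ has basis all paths, product = concatenation when the target of the first equals the source of the second, else $0$. Modules are right modules. $\omega_1$ is the first uncountable ordinal, $\mathrm{Lim}$ the class of nonzero limit ordinals. Fix a ladder system: for each $\alpha\in\omega_1\cap\mathrm{Lim}$ a set $C_\alpha=\{\zeta^\alpha_n:n\in\omega\}$, strictly increasingly enumerated and cofinal in $\alpha$, such that each $\zeta^\alpha_n$ equals $\delta+n+1$ for some $\delta\in\alpha\cap(\{0\}\cup\mathrm{Lim})$. For $\xi<\omega_1$ let $F^\xi=KQ$ if $\xi\notin\mathrm{Lim}$ and $F^\xi=\bigoplus_{n\in\omega}KQ$ if $\xi\in\mathrm{Lim}$; let $F=\bigoplus_{\xi<\omega_1}F^\xi$ (finite-support functions, coordinatewise operations). For $\gamma\in\omega_1\setminus\mathrm{Lim}$, $e^\gamma_0\in F$ has support $\{\gamma\}$ and value $e_0$ there; for $\alpha\in\mathrm{Lim}$ and $n\in\omega$, $e^{\alpha,n}_0\in F$ has support $\{\alpha\}$ and value at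 $\alpha$ the element of $\bigoplus_{m}KQ$ with support $\{n\}$ and value $e_0$. Let $G_\alpha$ be the $KQ$-submodule of $F$ generated by $\{e^{\zeta^\alpha_n}_0-e^{\alpha,n}_0+e^{\alpha,n+1}_0a_0a_1\cdots a_k:n\in\omega\}$, let $I=\sum_{\alpha\in\omega_1\cap\mathrm{Lim}}G_\alpha$, and let $M_{\omega_1}$ be the $KQ$-submodule of $F/I$ generated by $\{e^\gamma_0+I:\gamma\in\omega_1\setminus\mathrm{Lim}\}\cup\{e^{\alpha,n}_0+I:\alpha\in\omega_1\cap\mathrm{Lim},n\in\omega\}$. *)

(* Defs.v *)
From HB Require Import structures.
From mathcomp Require Import all_boot all_order all_algebra.
From mathcomp Require Import boolp.
From mathcomp Require Import finmap.
From mathcomp.multinomials Require Import monalg.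

Set Implicit Arguments.
Unset Strict Implicit.
Unset Printing Implicit Defensive.

Import Order.TTheory GRing.Theory.
Local Open Scope ring_scope.

(* The cyclic quiver Q with vertices 0..k and arrows a_i : i -> i+1 (i<k),
   a_k : k -> 0.  A path of Q is determined by its source vertex and its
   length (the trivial path e_v has length 0); paths are written left to
   right.                                                              *)
Definition qpath (k : nat) := ('I_k.+1 * nat)%type.

Definition psrc k (p : qpath k) : 'I_k.+1 := p.1.
Definition plen k (p : qpath k) : nat := p.2.
Definition ptgt k (p : qpath k) : nat := ((val p.1 + p.2) %% k.+1)%N.
Definition composable k (p q : qpath k) : bool := ptgt p == val (psrc q).
(* concatenation p q (meaningful when composable) *)
Definition pcat k (p q : qpath k) : qpath k := (p.1, (p.2 + q.2)%N).
Definition triv k (v : 'I_k.+1) : qpath k := (v, 0%N).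
(* the path a_0 a_1 ... a_k (from 0 back to 0, length k+1) *)
Definition cycle0 k : qpath k := (ord0, k.+1).

(* Since KQ is the K-algebra with basis the paths, a
   right KQ-module is a K-vector space with a K-linear right action of
   each path, satisfying  (v.p).q = v.(pq)  if p,q composable, 0 otherwise,
   and  sum_v v.e_v = v  (as 1 = sum_v e_v in KQ).                      *)
Record rmod (K : fieldType) (k : nat) := RMod {
  rcar :> lmodType K;
  ract : rcar -> qpath k -> rcar;
  ract_lin : forall p (a : K) (u v : rcar),
      ract (a *: u + v) p = a *: ract u p + ract v p;
  ract_comp : forall v p q,
      ract (ract v p) q = if composable p q then ract v (pcat p q) else 0;
  ract_unit : forall v, \sum_(i < k.+1) ract v (triv i) = v
}.

Definition is_hom (K : fieldType) (k : nat) (V W : lmodType K)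
    (aV : V -> qpath k -> V) (aW : W -> qpath k -> W) (f : V -> W) : Prop :=
  (forall (a : K) u v, f (a *: u + v) = a *: f u + f v) /\
  (forall v p, f (aV v p) = aW (f v) p).

(* Ext^1_{KQ}(M, N) <> 0 : there is a non-split short exact sequence
   0 -> N -> E -> M -> 0 of right KQ-modules (Yoneda description).     *)
Definition ext1_nonzero (K : fieldType) (k : nat) (M : rmod K k)
    (N : lmodType K) (aN : N -> qpath k -> N) : Prop :=
  exists (E : rmod K k) (i : N -> E) (pi : E -> M),
    [/\ is_hom aN (@ract _ _ E) i,
        is_hom (@ract _ _ E) (@ract _ _ M) pi,
        injective i,
        (forall m : M, exists e : E, pi e = m) &
        (forall e : E, pi e = 0 <-> exists n, e = i n)] /\
    ~ (exists s : M -> E,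
         is_hom (@ract _ _ M) (@ract _ _ E) s /\ forall m, pi (s m) = m).

(* Free right KQ-modules  (+)_{b in B} KQ : finitely supported K-valued
   functions on B x paths, with the path action extended linearly.     *)
Definition freeKQ (K : fieldType) (k : nat) (B : choiceType) :=
  {malg K[(B * qpath k)%type]}.

Definition freeact (K : fieldType) (k : nat) (B : choiceType)
    (x : freeKQ K k B) (q : qpath k) : freeKQ K k B :=
  \sum_(b <- enum_fset (msupp x))
     x@_b *: (if composable b.2 q then << (b.1, pcat b.2 q) >> else 0).

(* omega_1, given as a well-ordered type (W, <=) that is uncountable and
   all of whose proper initial segments are countable; this characterizes
   omega_1 up to order isomorphism.                                    *)
Section Omega1.
Context {d : Order.disp_t} (W : orderType d).
Local Open Scope order_scope.

Definition is_omega1 : Prop :=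
  [/\ (forall P : W -> Prop, (exists x, P x) ->
          exists x, P x /\ forall y, P y -> x <= y),
      ~ (exists f : W -> nat, injective f) &
      (forall a : W, exists f : W -> nat,
          forall x y, x < a -> y < a -> f x = f y -> x = y)].

Definition is_zero (a : W) : Prop := forall b, a <= b.
Definition is_lim (a : W) : Prop :=
  (exists b, b < a) /\ (forall b, b < a -> exists c, b < c /\ c < a).
Definition limb (a : W) : bool := `[< is_lim a >].
Definition is_succ (a b : W) : Prop := a < b /\ forall c, a < c -> b <= c.
Fixpoint iter_succ (n : nat) (a b : W) : Prop :=
  match n with
  | 0%N => b = a
  | n'.+1 => exists c, iter_succ n' a c /\ is_succ c b
  end.

Definition ladder_system (C : W -> nat -> W) : Prop :=
  forall al, is_lim al ->
    [/\ (forall n, C al n < C al n.+1),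
        (forall n, C al n < al),
        (forall b, b < al -> exists n, b <= C al n) &
        (forall n, exists de, [/\ de < al, is_zero de \/ is_lim de &
                                   iter_succ n.+1 de (C al n)])].
End Omega1.

(* The module F = (+)_{xi < omega_1} F^xi, F^xi = KQ (xi not limit) or
   (+)_{n} KQ (xi limit): free on the index set
   {(xi, n) | xi limit or n = 0}.                                      *)
Section Momega1.
Context (K : fieldType) (k : nat) {d : Order.disp_t} (W : orderType d)
        (C : W -> nat -> W).

Definition Fidx := {x : (W * nat)%type | limb x.1 || (x.2 == 0%N)}.
Definition Fmod := freeKQ K k Fidx.
Definition Fact : Fmod -> qpath k -> Fmod := @freeact K k Fidx.

(* e^xi_0 (n = 0, xi not limit) and e^{xi,n}_0 (xi limit) *)
Definition eF (xi : W) (n : nat) : Fmod :=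
  match @insub _ (fun x : (W * nat)%type => limb x.1 || (x.2 == 0%N)) Fidx
               (xi, n) with
  | Some i => << (i, triv (@ord0 k)) >>
  | None => 0
  end.

Definition sub_closed (P : Fmod -> Prop) : Prop :=
  [/\ P 0, (forall (a : K) u v, P u -> P v -> P (a *: u + v)) &
      (forall u q, P u -> P (Fact u q))].
Definition gen_sub (T : Fmod -> Prop) (x : Fmod) : Prop :=
  forall P, sub_closed P -> (forall t, T t -> P t) -> P x.

Definition Ggen (al : W) (n : nat) : Fmod :=
  eF (C al n) 0 - eF al n + Fact (eF al n.+1) (cycle0 k).

Definition Isub : Fmod -> Prop :=
  gen_sub (fun t => exists al n, is_lim al /\ t = Ggen al n).

Definition Ssub : Fmod -> Prop :=
  gen_sub (fun t => (exists g, ~ is_lim g /\ t = eF g 0) \/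
                    (exists al n, is_lim al /\ t = eF al n)).

(* M_{omega_1} is the submodule of F/I generated by the images of the e's,
   i.e. (S + I)/I = S/I (I is contained in S).  We say that (M, pi)
   realizes M_{omega_1} if pi restricted to S is a surjective
   KQ-homomorphism S -> M with kernel I, i.e. M is M_{omega_1} up to
   isomorphism.                                                        *)
Definition realizes_Momega1 (M : rmod K k) (pi : Fmod -> M) : Prop :=
  [/\ (forall (a : K) u v, Ssub u -> Ssub v -> pi (a *: u + v) = a *: pi u + pi v),
      (forall u q, Ssub u -> pi (Fact u q) = ract (pi u) q),
      (forall m : M, exists u, Ssub u /\ pi u = m) &
      (forall u, Ssub u -> (pi u = 0 <-> Isub u))].
End Momega1.

Definition sumKQ (K : fieldType) (k : nat) {d : Order.disp_t} (W : orderType d)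
  := freeKQ K k W.

(* Main.v *)
Require Import Defs.
From HB Require Import structures.
From mathcomp Require Import all_boot all_order all_algebra.
From mathcomp Require Import boolp functions.
From mathcomp Require Import finmap.
From mathcomp.multinomials Require Import monalg.
Set Implicit Arguments.
Unset Strict Implicit.
Unset Printing Implicit Defensive.
Import Order.TTheory GRing.Theory.
Local Open Scope ring_scope.

(* Proof: construct the pushout extension explicitly as a
   submodule of (completion of N) x M and show it does not split using a
   pressing-down style argument on omega_1. *)

Section Om.
Local Open Scope order_scope.
Context (d : Order.disp_t) (W : orderType d) (hW : is_omega1 W).

Lemma ctbl_bounded (A : W -> Prop) (h : W -> nat) :
  (forall x y, A x -> A y -> h x = h y -> x = y) ->
  exists u, forall x, A x -> x < u.
Proof.
move=> hinj; apply: contrapT => nb.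
have hx : forall u, exists x, A x /\ u <= x.
  move=> u; apply: contrapT => nx; apply: nb; exists u => x Ax.
  rewrite ltNge; apply/negP => ux; apply: nx; by exists x.
have [_ hc hseg] := hW.
pose xf u := sval (cid (hx u)).
have xfP u : A (xf u) /\ u <= xf u := svalP (cid (hx u)).
pose F a := sval (cid (hseg a)).
have FP a : forall x y, x < a -> y < a -> F a x = F a y -> x = y := svalP (cid (hseg a)).
apply: hc.
exists (fun u => choice.pickle (h (xf u), if u == xf u then 0%N else (F (xf u) u).+1)).
move=> u v /(pcan_inj choice.pickleK) [] /(hinj _ _ (xfP u).1 (xfP v).1) e.
case: eqP => eu; case: eqP => ev //.
- by move=> _; rewrite eu ev e.
- move=> [] hF; apply: (FP (xf u)) => //.
  + by rewrite lt_neqAle (xfP u).2 andbT; apply/eqP.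
  + by rewrite e lt_neqAle (xfP v).2 andbT; apply/eqP.
  + by rewrite hF e.
Qed.

Lemma no_regressive (S : W -> seq W) :
  ~ (forall a, is_lim a -> exists g, g < a /\ a \in S g).
Proof.
move=> H.
have [hwo hc hseg] := hW.
have [w0 _] : exists w : W, True.
  apply: contrapT => nw; apply: hc; exists (fun _ => 0%N) => x.
  by exfalso; apply: nw; exists x.
pose A be x := x = be \/ exists g, g < be /\ x \in S g.
have next : forall be, exists u, forall x, A be x -> x < u.
  move=> be.
  pose F := sval (cid (hseg be)).
  have FP : forall x y, x < be -> y < be -> F x = F y -> x = y := svalP (cid (hseg be)).
  pose gx x := if pselect (exists g, g < be /\ x \in S g) is left P then sval (cid P) else be.
  have gxP : forall x, (exists g, g < be /\ x \in S g) -> gx x < be /\ x \in S (gx x).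
    move=> x P; rewrite /gx; case: pselect => [P'|//]; exact: svalP (cid P').
  apply: (@ctbl_bounded _ (fun x => if x == be then 0%N
      else (choice.pickle (F (gx x), index x (S (gx x)))).+1)).
  move=> x y Ax Ay; case: eqP => ex; case: eqP => ey //; first by rewrite ex ey.
  move=> [] /(pcan_inj choice.pickleK) [] hF hi.
  have Px : exists g, g < be /\ x \in S g by case: Ax.
  have Py : exists g, g < be /\ y \in S g by case: Ay.
  have [gxb xin] := gxP x Px; have [gyb yin] := gxP y Py.
  have eg := FP _ _ gxb gyb hF.
  rewrite -eg in yin hi.
  by rewrite -(nth_index w0 xin) hi (nth_index w0 yin).
pose nx be := sval (cid (next be)).
have nxP : forall be x, A be x -> x < nx be := fun be => svalP (cid (next be)).
pose bs n := iter n nx w0.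
have bsS : forall n, bs n < bs n.+1 by move=> n; apply: nxP; left.
have [u hu] : exists u, forall x, (exists n, x = bs n) -> x < u.
  pose hn x := if pselect (exists n, x = bs n) is left P then sval (cid P) else 0%N.
  have hnP : forall x, (exists n, x = bs n) -> x = bs (hn x).
    move=> x P; rewrite /hn; case: pselect => [P'|//]; exact: svalP (cid P').
  apply: (@ctbl_bounded _ hn) => x y Ax Ay e.
  by rewrite (hnP _ Ax) (hnP _ Ay) e.
have [be [hbe hmin]] := hwo (fun x => forall n, bs n <= x)
  (ex_intro _ u (fun n => ltW (hu _ (ex_intro _ n erefl)))).
have bltb : forall b, b < be -> exists n, b < bs n.
  move=> b hb; apply: contrapT => nn.
  have : be <= b.
    apply: hmin => n; rewrite leNgt; apply/negP => bn; apply: nn; by exists n.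
  by rewrite leNgt hb.
have limbe : is_lim be.
  split; first by exists (bs 0); apply: lt_le_trans (bsS 0) (hbe 1%N).
  move=> b hb; have [n bn] := bltb b hb; exists (bs n); split => //.
  exact: lt_le_trans (bsS n) (hbe n.+1).
have [g [gb ing]] := H be limbe.
have [n gn] := bltb g gb.
have : be < bs n.+1 by apply: nxP; right; exists g.
by rewrite ltNge hbe.
Qed.
End Om.


Section Gen.
Context (K : fieldType) (T : choiceType).

Lemma supp_sumW (V : nmodType) (F : T -> K -> V) (g : {malg K[T]}) (d : {fset T}) :
  (forall b, F b 0 = 0) -> (msupp g `<=` d)%fset ->
  \sum_(b <- msupp g) F b g@_b = \sum_(b <- d) F b g@_b.
Proof.
move=> F0 le; rewrite [LHS](big_fset_incl _ le) => //= x xd /mcoeff_outdom ->.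
by rewrite F0.
Qed.
End Gen.
Section Gen2.
Context (K : fieldType) (T : choiceType).
Lemma supp_sum1 (g : {malg K[T]}) (b0 : T) (h : T -> K) :
  (forall b, b != b0 -> h b = 0) ->
  \sum_(b <- msupp g) g@_b * h b = g@_b0 * h b0.
Proof.
move=> hb.
rewrite (@supp_sumW K T K (fun b c => c * h b) g (msupp g `|` [fset b0])%fset); last first.
- exact: fsubsetUl.
- by move=> b; rewrite mul0r.
rewrite (big_fsetD1 b0) /=; last by rewrite !inE eqxx orbT.
rewrite big1_fset ?addr0 // => b; rewrite !inE => /andP [nb _] _.
by rewrite hb // mulr0.
Qed.

Lemma supp_sum_lin (V : lmodType K) (F : T -> V) (a : K) (x y : {malg K[T]}) :
  \sum_(b <- msupp (a *: x + y)) (a *: x + y)@_b *: F b =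
  a *: \sum_(b <- msupp x) x@_b *: F b + \sum_(b <- msupp y) y@_b *: F b.
Proof.
pose d := (msupp x `|` msupp y `|` msupp (a *: x + y))%fset.
have F0 : forall b, (fun b c => c *: F b) b 0 = 0 by move=> b; rewrite scale0r.
rewrite (@supp_sumW K T V (fun b c => c *: F b) _ d) //; last first.
  by apply/fsubsetP => z zi; rewrite !inE zi ?orbT.
rewrite (@supp_sumW K T V (fun b c => c *: F b) x d) //; last first.
  by apply/fsubsetP => z zi; rewrite !inE zi ?orbT.
rewrite (@supp_sumW K T V (fun b c => c *: F b) y d) //; last first.
  by apply/fsubsetP => z zi; rewrite !inE zi ?orbT.
rewrite scaler_sumr -big_split; apply: eq_bigr => b _ /=.
by rewrite mcoeffD mcoeffZ scalerDl scalerA.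
Qed.
End Gen2.

Section FA.
Context (K : fieldType) (k : nat) (B : choiceType).
Definition Gq (q : qpath k) (b : B * qpath k) : freeKQ K k B :=
  if composable b.2 q then << (b.1, pcat b.2 q) >> else 0.
Lemma freeactE (x : freeKQ K k B) q :
  freeact x q = \sum_(b <- msupp x) x@_b *: Gq q b.
Proof. by []. Qed.
Lemma freeact_lin a (x y : freeKQ K k B) q :
  freeact (a *: x + y) q = a *: freeact x q + freeact y q.
Proof. by rewrite !freeactE supp_sum_lin. Qed.

Lemma freeact_coef (x : freeKQ K k B) q (be : B) (v : 'I_k.+1) (L : nat) :
  (freeact x q)@_(be, (v, L)) =
  if (q.2 <= L)%N && composable (v, (L - q.2)%N) q
  then x@_(be, (v, (L - q.2)%N)) else 0.
Proof.
rewrite freeactE raddf_sum /=.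
under eq_bigr => b _ do rewrite mcoeffZ.
pose b0 : B * qpath k := (be, (v, (L - q.2)%N)).
have key : forall b : B * qpath k, (b.1, pcat b.2 q) == (be, (v, L)) ->
   b = b0 /\ (q.2 <= L)%N.
  case=> b1 [bv bl] /=; rewrite /pcat /= !xpair_eqE => /andP [/eqP -> /andP [/eqP -> /eqP E]].
  by rewrite /b0 -E addnK leq_addl.
rewrite (@supp_sum1 K _ x b0).
  case: ifP => H.
    rewrite /Gq /= (andP H).2 mcoeffU.
    case/andP: H => H1 _.
    by rewrite /pcat /= subnK // eqxx mulr1.
  rewrite /Gq /=; case: ifP => Hc; last by rewrite mcoeff0 mulr0.
  rewrite mcoeffU; case: eqP => [E|_]; last by rewrite mulr0.
  have [_ hq] := key b0 (introT eqP E).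
  by move: H; rewrite hq Hc.
move=> b nb; rewrite /Gq; case: ifP => _; last by rewrite mcoeff0.
rewrite mcoeffU; case: eqP => // E.
have [eb _] := key _ (introT eqP E).
by move: nb; rewrite eb eqxx.
Qed.
End FA.

Section Nhat.
Context (K : fieldType) (k : nat) (B : choiceType).
Definition Nh := (B * qpath k -> K^o).
Definition hact (x : Nh) (q : qpath k) : Nh := fun b =>
  if (q.2 <= b.2.2)%N && composable (b.2.1, (b.2.2 - q.2)%N) q
  then x (b.1, (b.2.1, (b.2.2 - q.2)%N)) else 0.

Lemma NhD (x y : Nh) b : (x + y) b = x b + y b. Proof. by []. Qed.
Lemma NhZ (a : K) (x : Nh) b : (a *: x) b = a * x b. Proof. by []. Qed.
Lemma NhN (x : Nh) b : (- x) b = - x b. Proof. by []. Qed.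
Lemma NhB (x y : Nh) b : (x - y) b = x b - y b. Proof. by []. Qed.
Lemma Nh0 b : (0 : Nh) b = 0. Proof. by []. Qed.

Lemma hact_lin (a : K) (x y : Nh) q : hact (a *: x + y) q = a *: hact x q + hact y q.
Proof.
apply/funext => b; rewrite !NhD !NhZ /hact /=; case: ifP => _ //.
by rewrite mulr0 addr0.
Qed.

Lemma hact_comp (x : Nh) p q :
  hact (hact x p) q = if composable p q then hact x (pcat p q) else 0.
Proof.
apply/funext => -[be [v L]]; case: p => pv pl; case: q => qv ql.
rewrite (fun_if (fun f : Nh => f (be, (v, L)))) /hact /composable /pcat /ptgt /psrc /=.
have eL : (L - ql - pl = L - (pl + ql))%N by rewrite addnC subnDA.
rewrite eL.
case hF: (pl + ql <= L)%N; last first.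
  case: ifP => [/andP [hA _]|_]; last by case: ifP.
  by rewrite (leq_subRL pl hA) addnC hF /=; case: ifP.
have hA : (ql <= L)%N by apply: leq_trans hF; rewrite leq_addl.
have hC : (pl <= L - ql)%N by rewrite leq_subRL // addnC.
rewrite hA hC /=.
case hG: ((v + (L - (pl + ql))) %% k.+1 == pv)%N.
  have -> : ((v + (L - ql)) %% k.+1 == qv)%N = ((pv + pl) %% k.+1 == qv)%N.
    rewrite -(eqP hG) modnDml -addnA -eL subnK //.
  by case: ifP.
by case: ifP => //; case: ifP.
Qed.

Lemma hact_unit (x : Nh) : \sum_(i < k.+1) hact x (triv i) = x.
Proof.
apply/funext => -[be [v L]]; rewrite fct_sumE /hact /triv /composable /ptgt /psrc /=.
rewrite subn0.
pose i0 : 'I_k.+1 := Ordinal (ltn_pmod (v + L) (ltn0Sn k)).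
rewrite (bigD1 i0) //= eqxx big1 ?addr0 // => i ni.
case: ifP => // /eqP E; case/eqP: ni; apply/val_inj => /=; by rewrite E.
Qed.

Definition emb (n : freeKQ K k B) : Nh := fun b => n@_b.
Lemma emb_lin (a : K) (x y : freeKQ K k B) : emb (a *: x + y) = a *: emb x + emb y.
Proof. by apply/funext => b; rewrite /emb mcoeffD mcoeffZ. Qed.
Lemma emb_act (x : freeKQ K k B) q : emb (freeact x q) = hact (emb x) q.
Proof. by apply/funext => -[be [v L]]; rewrite /emb freeact_coef. Qed.
Lemma emb_inj : injective emb.
Proof. by move=> x y E; apply/malgP => b; have := congr1 (fun f => f b) E. Qed.
End Nhat.

Section SumLemmas.
Context (K : fieldType) (T : choiceType) (V : lmodType K) (F : T -> V).
Definition Lam (x : {malg K[T]}) : V := \sum_(b <- msupp x) x@_b *: F b.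
Lemma Lam_lin a x y : Lam (a *: x + y) = a *: Lam x + Lam y.
Proof. exact: supp_sum_lin. Qed.
Lemma Lam0 : Lam 0 = 0.
Proof. by rewrite /Lam msupp0 big_nil. Qed.
Lemma LamU b : Lam << b >> = F b.
Proof.
rewrite /Lam (@supp_sumW K T V (fun b c => c *: F b) _ [fset b]%fset).
- by rewrite big_seq_fset1 mcoeffUU scale1r.
- by move=> c; rewrite scale0r.
- exact: msuppU_le.
Qed.
Lemma Lam_sum (I : Type) (s : seq I) (c : I -> K) (g : I -> {malg K[T]}) :
  Lam (\sum_(i <- s) c i *: g i) = \sum_(i <- s) c i *: Lam (g i).
Proof.
elim: s => [|i s IH]; first by rewrite !big_nil Lam0.
by rewrite !big_cons Lam_lin IH.
Qed.
End SumLemmas.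

Section Psi.
Context (K : fieldType) (k : nat) (d : Order.disp_t) (W : orderType d).
Local Notation Fm := (Fmod K k W).
Local Notation NN := (Nh K k W).

Definition wgtb (b' : W * qpath k) (b : Fidx W * qpath k) : bool :=
  [&& ((val b.1).1 == b'.1), (b.2.1 == ord0), (b.2.2 <= b'.2.2)%N &
      (k.+1 %| b'.2.2 - b.2.2)%N].
Definition wgt (b' : W * qpath k) (b : Fidx W * qpath k) : K^o := (wgtb b' b)%:R.
Definition condb (b' : W * qpath k) : bool := (b'.2.1 == ord0) && limb b'.1.

Definition psi (x : Fm) : NN := fun b' =>
  if condb b' then - Lam (wgt b') x else 0.

Lemma psi_lin a (x y : Fm) : psi (a *: x + y) = a *: psi x + psi y.
Proof.
apply/funext => b'; rewrite NhD NhZ /psi; case: ifP => _; last by rewrite mulr0 addr0.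
by rewrite Lam_lin opprD mulrN.
Qed.

Lemma psi0 : psi 0 = 0.
Proof. by apply/funext => b'; rewrite /psi Lam0 oppr0; case: ifP. Qed.

Lemma psiU b b' : psi << b >> b' = if condb b' then - wgt b' b else 0.
Proof. by rewrite /psi LamU. Qed.

Lemma wgt_key (b' : W * qpath k) (b : Fidx W * qpath k) (q : qpath k) :
  condb b' ->
  composable b.2 q && wgtb b' (b.1, pcat b.2 q) =
  [&& (q.2 <= b'.2.2)%N, composable (b'.2.1, (b'.2.2 - q.2)%N) q &
      wgtb (b'.1, (b'.2.1, (b'.2.2 - q.2)%N)) b].
Proof.
case: b' => be [v' L']; case: b => i [v0 L0]; case: q => qv ql.
rewrite /condb /wgtb /composable /pcat /ptgt /psrc /= => /andP [/eqP -> _].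
case: ((val i).1 == be); last by rewrite !andbF.
case hv0: (v0 == ord0); last by rewrite !andbF.
rewrite (eqP hv0) /= !add0n.
case h: (L0 + ql <= L')%N; last first.
  rewrite andbF; apply/esym/negbTE; apply/negP => /and3P [h1 _ /andP [h2 _]].
  by move: h; rewrite addnC -leq_subRL // h2.
have h1 : (ql <= L')%N by apply: leq_trans h; rewrite leq_addl.
have h2 : (L0 <= L' - ql)%N by rewrite leq_subRL // addnC.
rewrite h1 h2 /= addnC subnDA.
case hd: (k.+1 %| L' - ql - L0)%N; last by rewrite !andbF.
rewrite !andbT.
have e : (L' - ql == L0 %[mod k.+1])%N by rewrite eqn_mod_dvd.
by rewrite (eqP e).
Qed.

Lemma psi_act (x : Fm) q : psi (Fact x q) = hact (psi x) q.
Proof.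
apply/funext => -[be [v' L']].
rewrite /hact /psi /Fact freeactE Lam_sum /=.
set b'' := (be, (v', (L' - q.2)%N)).
have cb : condb b'' = condb (be, (v', L')) by [].
rewrite cb; case hc: (condb _); last by case: ifP.
have E : forall b, Lam (wgt (be, (v', L'))) (@Gq K _ _ q b) =
    ((q.2 <= L')%N && composable (v', (L' - q.2)%N) q && wgtb b'' b)%:R.
  move=> b; rewrite /Gq; case: ifP => hcomp.
    by rewrite LamU /wgt -andbA -(wgt_key b q hc) /= hcomp.
  by rewrite Lam0 -andbA -(wgt_key b q hc) /= hcomp.
under eq_bigr => b _ do rewrite E.
case hA: ((q.2 <= L')%N && composable (v', (L' - q.2)%N) q) => /=.
  by [].
rewrite big1 ?oppr0 // => b _; by rewrite scaler0.
Qed.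
End Psi.

Section GenSub.
Context (K : fieldType) (k : nat) (d : Order.disp_t) (W : orderType d).
Local Notation Fm := (Fmod K k W).
Lemma gen_sub_closed (T : Fm -> Prop) : sub_closed (gen_sub T).
Proof.
split.
- by move=> P [H0 _ _] _.
- move=> a u v hu hv P hP hT; case: (hP) => _ hl _; apply: hl; [exact: hu | exact: hv].
- move=> u q hu P hP hT; case: (hP) => _ _ ha; apply: ha; exact: hu.
Qed.
Lemma gen_sub_incl (T : Fm -> Prop) t : T t -> gen_sub T t.
Proof. by move=> Tt P _ hT; apply: hT. Qed.
End GenSub.

Lemma ract0 (K : fieldType) (k : nat) (M : rmod K k) q : ract (0 : M) q = 0.
Proof.
have := ract_lin q 1 (0 : M) 0.
rewrite !scale1r !addr0 => H.
by apply: (addrI (ract (0 : M) q)); rewrite addr0 -H.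
Qed.

Section Ext.
Context (K : fieldType) (k : nat) (d : Order.disp_t) (W : orderType d)
  (C : W -> nat -> W) (M : rmod K k) (pi : Fmod K k W -> M)
  (hM : @realizes_Momega1 K k d W C M pi).
Local Notation Fm := (Fmod K k W).
Local Notation NN := (Nh K k W).
Local Notation SS := (@Ssub K k d W).
Local Notation NK := (sumKQ K k W).

Lemma pi_lin a u v : SS u -> SS v -> pi (a *: u + v) = a *: pi u + pi v.
Proof. by case: hM => h _ _ _; apply: h. Qed.
Lemma pi_act u q : SS u -> pi (Fact u q) = ract (pi u) q.
Proof. by case: hM => _ h _ _; apply: h. Qed.
Lemma pi_surj (m : M) : exists u, SS u /\ pi u = m.
Proof. by case: hM => _ _ h _; apply: h. Qed.
Lemma pi_ker u : SS u -> (pi u = 0 <-> Isub C u).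
Proof. by case: hM => _ _ _ h; apply: h. Qed.

Lemma SS0 : SS 0.
Proof. by case: (gen_sub_closed (K:=K) (k:=k) (W:=W) (fun t => (exists g, ~ is_lim g /\ t = eF K k g 0) \/
                    (exists al n, is_lim al /\ t = eF K k al n))). Qed.
Lemma SS_lin a u v : SS u -> SS v -> SS (a *: u + v).
Proof. by case: (gen_sub_closed (K:=K) (k:=k) (W:=W) (fun t => (exists g, ~ is_lim g /\ t = eF K k g 0) \/
                    (exists al n, is_lim al /\ t = eF K k al n))) => _ h _; apply: h. Qed.
Lemma SS_act u q : SS u -> SS (Fact u q).
Proof. by case: (gen_sub_closed (K:=K) (k:=k) (W:=W) (fun t => (exists g, ~ is_lim g /\ t = eF K k g 0) \/
                    (exists al n, is_lim al /\ t = eF K k al n))) => _ _ h; apply: h. Qed.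
Lemma SS_eF g n : (is_lim g \/ n = 0%N) -> SS (eF K k g n).
Proof.
move=> h; apply: gen_sub_incl.
case: (pselect (is_lim g)) => hg.
  by right; exists g, n.
by left; exists g; split => //; case: h => // ->.
Qed.

Lemma pi0 : pi 0 = 0.
Proof.
have := pi_lin 1 SS0 SS0; rewrite !scale1r !addr0 => H.
by apply: (addrI (pi 0)); rewrite addr0 -H.
Qed.

Lemma emb0 : emb (0 : NK) = 0.
Proof. by apply/funext => b; rewrite /emb mcoeff0. Qed.

Definition Pe (e : NN * M) : Prop :=
  exists s, SS s /\ pi s = e.2 /\ exists n : NK, e.1 = emb n + psi s.
Definition Peb : {pred (NN * M)} := fun e => `[< Pe e >].

Lemma Peb_closed : submod_closed Peb.
Proof.
split.
  apply/asboolP; exists 0; split; first exact: SS0.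
  split; first by rewrite pi0.
  by exists 0; rewrite emb0 psi0 addr0.
move=> a [x1 m1] [x2 m2] /asboolP [s1 [hs1 [hp1 [n1 hn1]]]] /asboolP [s2 [hs2 [hp2 [n2 hn2]]]].
apply/asboolP; exists (a *: s1 + s2); split; first exact: SS_lin.
split; first by rewrite pi_lin //= hp1 hp2.
exists (a *: n1 + n2); move: hn1 hn2 => /= -> ->; rewrite emb_lin psi_lin.
by rewrite scalerDr addrACA.
Qed.

HB.instance Definition _ := GRing.isSubmodClosed.Build K (NN * M)%type Peb Peb_closed.

Record Ecar := ECar { eval :> NN * M; eP : eval \in Peb }.
HB.instance Definition _ := [isSub for eval].
HB.instance Definition _ := [Choice of Ecar by <:].
HB.instance Definition _ := [SubChoice_isSubLmodule of Ecar by <:].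

Lemma evalD a (u v : Ecar) : eval (a *: u + v) = a *: eval u + eval v.
Proof. by []. Qed.
Lemma eval0 : eval (0 : Ecar) = 0.
Proof. by []. Qed.

Lemma hactD (x y : NN) q : hact (x + y) q = hact x q + hact y q.
Proof. by rewrite -[x]scale1r hact_lin !scale1r. Qed.

Lemma ractE_P (e : Ecar) q : (hact (eval e).1 q, ract (eval e).2 q) \in Peb.
Proof.
case: e => [[x m]] /= /asboolP [s [hs [hp [n hn]]]].
apply/asboolP; exists (Fact s q); split; first exact: SS_act.
split; first by rewrite pi_act //= hp.
exists (freeact n q); move: hn => /= ->; rewrite hactD emb_act psi_act.
by [].
Qed.

Definition ractE (e : Ecar) q : Ecar := ECar (ractE_P e q).

Lemma ractE_lin p (a : K) (u v : Ecar) :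
  ractE (a *: u + v) p = a *: ractE u p + ractE v p.
Proof.
apply: val_inj => /=.
by rewrite hact_lin ract_lin.
Qed.

Lemma ractE_comp (e : Ecar) p q :
  ractE (ractE e p) q = if composable p q then ractE e (pcat p q) else 0.
Proof.
apply: val_inj => /=; rewrite hact_comp ract_comp.
by case: ifP.
Qed.

Lemma eval_sum (I : Type) (r : seq I) (F : I -> Ecar) :
  eval (\sum_(i <- r) F i) = \sum_(i <- r) eval (F i).
Proof.
elim: r => [|i r IH]; first by rewrite !big_nil.
by rewrite !big_cons -IH.
Qed.

Lemma ractE_unit (e : Ecar) : \sum_(i < k.+1) ractE e (triv i) = e.
Proof.
apply: val_inj => /=; rewrite eval_sum.
have f1 : forall (r : seq 'I_k.+1) (F : 'I_k.+1 -> NN * M),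
    (\sum_(i <- r) F i).1 = \sum_(i <- r) (F i).1.
  by move=> r F; elim: r => [|i r IH]; rewrite ?big_nil ?big_cons //= IH.
have f2 : forall (r : seq 'I_k.+1) (F : 'I_k.+1 -> NN * M),
    (\sum_(i <- r) F i).2 = \sum_(i <- r) (F i).2.
  by move=> r F; elim: r => [|i r IH]; rewrite ?big_nil ?big_cons //= IH.
case: e => [[x m] Pxm] /=.
rewrite [\sum_(i < k.+1) _]surjective_pairing f1 f2 /=.
by rewrite hact_unit ract_unit.
Qed.

Definition EE : rmod K k := RMod ractE_lin ractE_comp ractE_unit.

End Ext.

Section Main.
Context (K : fieldType) (k : nat) (d : Order.disp_t) (W : orderType d)
  (C : W -> nat -> W) (hC : ladder_system C) (M : rmod K k) (pi : Fmod K k W -> M)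
  (hM : @realizes_Momega1 K k d W C M pi).
Local Notation Fm := (Fmod K k W).
Local Notation NN := (Nh K k W).
Local Notation SS := (@Ssub K k d W).
Local Notation NK := (sumKQ K k W).

Lemma psiD (x y : Fm) : psi (x + y) = psi x + psi y.
Proof. by have := psi_lin 1 x y; rewrite !scale1r. Qed.
Lemma psiN (x : Fm) : psi (- x) = - psi x.
Proof. by have := psi_lin (-1) x 0; rewrite !addr0 psi0 addr0 !scaleN1r. Qed.
Lemma embD (x y : NK) : emb (x + y) = emb x + emb y.
Proof. by have := emb_lin 1 x y; rewrite !scale1r. Qed.

Fact mono_key : unit. Proof. by []. Qed.
Definition mono (b : Fidx W * qpath k) : Fm := locked_with mono_key (<< b >>).
Lemma monoE b : mono b = << b >>.
Proof. by rewrite /mono unlock. Qed.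
Lemma psi_mono b b' : psi (mono b) b' = if condb b' then - wgt K b' b else 0.
Proof. by rewrite monoE; exact: psiU. Qed.

Lemma eF_U g m : limb g || (m == 0)%N ->
  exists u : Fidx W, val u = (g, m) /\ eF K k g m = mono (u, triv (@ord0 k)).
Proof.
move=> h; rewrite /eF; case: insubP => [u _ eu|]; first by exists u; rewrite monoE.
by rewrite h.
Qed.

Lemma succ_not_lim (a b : W) : is_succ a b -> ~ is_lim b.
Proof.
move=> [ab hb] [_ hl]; have [c [ac cb]] := hl a ab.
by have := hb c ac; rewrite leNgt cb.
Qed.

Lemma C_not_lim al n : is_lim al -> ~ is_lim (C al n).
Proof.
move=> hal; have [_ _ _ h4] := hC hal.
have [de [_ _ [c [_ hs]]]] := h4 n.
exact: succ_not_lim hs.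
Qed.


Lemma psi_Ggen al n : is_lim al ->
  psi (Ggen K k C al n) = emb (<< (al, triv (@ord0 k)) >> : NK).
Proof.
move=> hal.
have hal' : limb al by apply/asboolP.
have [u0 [vu0 e0]] := @eF_U (C al n) 0 (orbT _).
have [u1 [vu1 e1]] := @eF_U al n ltac:(by rewrite hal').
have [u2 [vu2 e2]] := @eF_U al n.+1 ltac:(by rewrite hal').
rewrite /Ggen e0 e1 e2 psiD psiD psiN psi_act.
apply/funext => -[be [v L]].
rewrite NhD NhB.
rewrite [in X in X - _ + _ = _](psi_mono (u0, triv ord0) (be, (v, L))).
rewrite [in X in _ - X + _ = _](psi_mono (u1, triv ord0) (be, (v, L))).
have hh : hact (psi (mono (u2, triv ord0))) (cycle0 k) (be, (v, L)) =
  if (k.+1 <= L)%N && composable (v, (L - k.+1)%N) (cycle0 k)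
  then psi (mono (u2, triv ord0)) (be, (v, (L - k.+1)%N)) else 0 by [].
rewrite [in X in _ + X = _]hh [in X in _ + X = _](psi_mono (u2, triv ord0)).
have he : emb (<<(al, triv ord0)>> : NK) (be, (v, L)) = ((al, triv ord0) == (be, (v, L)))%:R.
  by rewrite /emb mcoeffU.
rewrite he /condb /wgt /wgtb /composable /ptgt /psrc /cycle0 /triv /= vu0 vu1 vu2 /= !subn0 !xpair_eqE.
case hv: (v == ord0); last first.
  rewrite /= [ord0 == v]eq_sym hv andbF; case: ifP => _; by rewrite subr0 addr0.
rewrite /=.
case hb: (limb be); last first.
  rewrite /=; case: (eqP (x := al)) => [eb|_]; first by rewrite -eb hal' in hb.
  by rewrite /=; case: ifP => _; rewrite subr0 addr0.
rewrite (eqP hv) /= add0n [(0%N == L)]eq_sym.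
have hCb : (C al n == be) = false.
  apply/negbTE/negP => /eqP eb; have := @C_not_lim al n hal; apply; rewrite eb.
  exact/asboolP.
rewrite hCb /= oppr0 sub0r opprK.
case: (al == be); last by rewrite /= add0r oppr0; case: ifP.
rewrite /=.
case: (posnP L) => [|Lpos].
  by move=> ->; rewrite dvdn0 /= addr0.
case: (leqP k.+1 L) => hL.
  have e3 : (((L - k.+1) %% k.+1)%N == 0%N) = (k.+1 %| L)%N.
    by rewrite -(dvdn_subl hL (dvdnn _)).
  rewrite e3 (dvdn_subl hL (dvdnn _)) /=.
  by case: (k.+1 %| L)%N; rewrite /= ?addrN ?addr0.
have -> : (k.+1 %| L)%N = false.
  by apply/negbTE/negP => /(dvdn_leq Lpos); rewrite leqNgt hL.
by rewrite /= addr0.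
Qed.

Lemma psi_I s : Isub C s -> exists n : NK, psi s = emb n.
Proof.
move=> H; apply: (H (fun s => exists n : NK, psi s = emb n)); last first.
  move=> t [al [n [hal ->]]]; exists << (al, triv ord0) >>; exact: psi_Ggen.
split.
- by exists 0; rewrite psi0 emb0.
- move=> a u v [n1 h1] [n2 h2]; exists (a *: n1 + n2).
  by rewrite psi_lin emb_lin h1 h2.
- move=> u q [n h]; exists (freeact n q); by rewrite psi_act emb_act h.
Qed.

Local Notation E := (EE hM).

Lemma iEE_P (n : NK) : (emb n, (0 : M)) \in Peb pi.
Proof.
apply/asboolP; exists 0; split; first exact: SS0.
split; first by rewrite (pi0 hM).
by exists n; rewrite psi0 addr0.
Qed.
Definition iEE (n : NK) : E := ECar (iEE_P n).
Definition piEE (e : E) : M := (eval e).2.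

End Main.

Section Fin.
Context (K : fieldType) (k : nat) (d : Order.disp_t) (W : orderType d)
  (hW : is_omega1 W)
  (C : W -> nat -> W) (hC : ladder_system C) (M : rmod K k) (pi : Fmod K k W -> M)
  (hM : @realizes_Momega1 K k d W C M pi).
Local Notation Fm := (Fmod K k W).
Local Notation NN := (Nh K k W).
Local Notation SS := (@Ssub K k d W).
Local Notation NK := (sumKQ K k W).
Local Notation E := (EE hM).

Lemma iE_hom : is_hom (@freeact K k W) (@ract _ _ E) (iEE hM).
Proof.
split.
  move=> a u v; apply: val_inj => /=.
  rewrite emb_lin.
  have -> : a *: (emb u, (0 : M)) + (emb v, 0) = (a *: emb u + emb v, a *: 0 + 0) by [].
  by rewrite scaler0 addr0.
move=> v p; apply: val_inj => /=.
by rewrite emb_act ract0.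
Qed.

Lemma piE_hom : is_hom (@ract _ _ E) (@ract _ _ M) (@piEE _ _ _ _ _ _ _ hM).
Proof. by split. Qed.

Lemma iE_inj : injective (iEE hM).
Proof.
move=> x y /(congr1 (fun e : E => (eval e).1)) /=; exact: emb_inj.
Qed.

Lemma piE_surj (m : M) : exists e : E, piEE e = m.
Proof.
have [s [hs hp]] := pi_surj hM m.
have P : (psi s, m) \in Peb pi.
  apply/asboolP; exists s; split => //; split => //.
  by exists 0; rewrite emb0 add0r.
by exists (ECar P).
Qed.

Lemma embB (x y : NK) : emb (x - y) = emb x - emb y.
Proof. by have := emb_lin (-1) y x; rewrite !scaleN1r addrC [_ + emb x]addrC. Qed.
Lemma embD' (x y : NK) : emb (x + y) = emb x + emb y.
Proof. by have := emb_lin 1 x y; rewrite !scale1r. Qed.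

Lemma piE_ker (e : E) : piEE e = 0 <-> exists n, e = iEE hM n.
Proof.
split; last by move=> [n ->].
case: e => [[x m] P] hm; rewrite /piEE /= in hm.
have /asboolP [s [hs [hp [n hn]]]] := P.
have Is : Isub C s by apply/(pi_ker hM hs); rewrite hp /=.
have [n' hn'] := psi_I hC Is.
exists (n + n'); apply: val_inj => /=.
rewrite /= in hn; by rewrite hn hn' embD' hm.
Qed.

Lemma hactB (x y : NN) q : hact (x - y) q = hact x q - hact y q.
Proof. by have := hact_lin (-1) y x q; rewrite !scaleN1r addrC [_ + hact x q]addrC. Qed.

Lemma nonsplit :
  ~ (exists s : M -> E, is_hom (@ract _ _ M) (@ract _ _ E) s /\
       forall m, piEE (s m) = m).
Proof.
move=> [sg [[slin sact] ssec]].
pose X (m : M) : NN := (eval (sg m)).1.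
have Xlin : forall a u v, X (a *: u + v) = a *: X u + X v.
  by move=> a u v; rewrite /X slin.
have Xact : forall m q, X (ract m q) = hact (X m) q.
  by move=> m q; rewrite /X sact.
have X0 : X 0 = 0.
  have := Xlin 1 0 0; rewrite !scale1r !addr0 => H.
  by apply: (addrI (X 0)); rewrite addr0 -H.
pose Y s := X (pi s) - psi s.
have Ylin : forall a u v, SS u -> SS v -> Y (a *: u + v) = a *: Y u + Y v.
  move=> a u v hu hv; rewrite /Y (pi_lin hM a hu hv) Xlin psi_lin.
  by rewrite scalerBr opprD addrACA.
have Yact : forall u q, SS u -> Y (Fact u q) = hact (Y u) q.
  by move=> u q hu; rewrite /Y (pi_act hM q hu) Xact psi_act hactB.
have Yemb : forall s, SS s -> exists n : NK, Y s = emb n.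
  move=> s hs.
  have /asboolP [s' [hs' [hp' [n hn]]]] := eP (sg (pi s)).
  have hp : pi s' = pi s by rewrite hp'; exact: ssec.
  have hd : SS ((-1) *: s' + s) := SS_lin (-1) hs' hs.
  have pd : pi ((-1) *: s' + s) = 0 by rewrite (pi_lin hM _ hs' hs) hp scaleN1r addNr.
  have [n'' hn''] := psi_I hC ((pi_ker hM hd).1 pd).
  exists (n - n''); rewrite embB -hn'' psi_lin /Y /X hn scaleN1r.
  by rewrite opprD opprK addrA.
have key : forall al, is_lim al -> exists j p, Y (eF K k (C al j) 0) (al, p) != 0.
  move=> al hal; apply: contrapT => nk.
  have G0 : forall j p, Y (eF K k (C al j) 0) (al, p) = 0.
    move=> j p; apply/eqP; apply: contrapT => /negP h; apply: nk; by exists j, p.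
  have SSe : forall j, SS (eF K k al j) := fun j => SS_eF (or_introl hal).
  have SSc : forall j, SS (eF K k (C al j) 0) := fun j => SS_eF (or_intror erefl).
  have rel : forall j, - Y (eF K k al j) + Y (eF K k (C al j) 0) +
      hact (Y (eF K k al j.+1)) (cycle0 k) = - emb (<<(al, triv ord0)>> : NK).
    move=> j.
    have eG : Ggen K k C al j = 1 *: ((-1) *: eF K k al j + eF K k (C al j) 0) +
        Fact (eF K k al j.+1) (cycle0 k).
      by rewrite /Ggen scale1r scaleN1r [- _ + _]addrC.
    have hS1 : SS ((-1) *: eF K k al j + eF K k (C al j) 0) := SS_lin _ (SSe j) (SSc j).
    have hS2 : SS (Fact (eF K k al j.+1) (cycle0 k)) := SS_act _ (SSe j.+1).
    have hSG : SS (Ggen K k C al j) by rewrite eG; exact: SS_lin.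
    have hIG : Isub C (Ggen K k C al j) by apply: gen_sub_incl; exists al, j.
    have YG : Y (Ggen K k C al j) = - emb (<<(al, triv ord0)>> : NK).
      by rewrite /Y ((pi_ker hM hSG).2 hIG) X0 sub0r (psi_Ggen K k hC j hal).
    rewrite -YG eG (Ylin _ _ _ hS1 hS2) (Ylin _ _ _ (SSe j) (SSc j)).
    by rewrite (Yact _ _ (SSe j.+1)) scale1r scaleN1r.
  pose pt m : W * qpath k := (al, (ord0, (m * k.+1)%N)).
  have hemb : forall m, emb (<<(al, triv ord0)>> : NK) (pt m) = (m == 0%N)%:R.
    move=> m; rewrite /emb /pt mcoeffU /triv !xpair_eqE !eqxx /=.
    by case: m => [|m] //=; rewrite mulSn.
  have hh0 : forall x : NN, hact x (cycle0 k) (pt 0) = 0 by move=> x; rewrite /hact.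
  have hhS : forall (x : NN) m, hact x (cycle0 k) (pt m.+1) = x (pt m).
    move=> x m; rewrite /hact /pt /cycle0 /composable /ptgt /psrc /= mulSn.
    by rewrite leq_addr addKn add0n modnMl eqxx.
  have rp : forall j m, - Y (eF K k al j) (pt m) + hact (Y (eF K k al j.+1)) (cycle0 k) (pt m)
      = - (m == 0%N)%:R.
    move=> j m; have := congr1 (fun f : NN => f (pt m)) (rel j).
    by rewrite /= !NhD NhN NhN hemb /pt G0 addr0.
  have all1 : forall m j, Y (eF K k al j) (pt m) = 1.
    elim=> [|m IH] j.
      by have := rp j 0%N; rewrite hh0 addr0 /= => /oppr_inj.
    have := rp j m.+1; rewrite hhS IH /= oppr0 => /eqP; rewrite addrC subr_eq0 => /eqP.
    by move=> <-.
  have [n0 hn0] := Yemb _ (SSe 0%N).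
  pose m := (\sum_(b <- msupp n0) b.2.2).+1.
  have : n0@_(pt m) = 1 by have := all1 m 0%N; rewrite hn0.
  rewrite mcoeff_outdom; first by move/eqP; rewrite eq_sym oner_eq0.
  apply/negP => hin.
  have : ((pt m).2.2 <= \sum_(b <- msupp n0) b.2.2)%N.
    by rewrite (big_rem _ hin) /= leq_addr.
  rewrite /pt /= leqNgt; apply/negP/negPn.
  by apply: leq_pmulr.
pose nY g : NK := sval (cid (Yemb (eF K k g 0) (SS_eF (or_intror erefl)))).
have nYP : forall g, Y (eF K k g 0) = emb (nY g).
  by move=> g; exact: (svalP (cid (Yemb (eF K k g 0) (SS_eF (or_intror erefl))))).
apply: (no_regressive hW (S := fun g => [seq b.1 | b <- msupp (nY g)])).
move=> a ha; have [j [p hp]] := key a ha; exists (C a j); split.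
  by have [_ h2 _ _] := hC ha; exact: h2.
apply/mapP; exists (a, p) => //.
by rewrite -mcoeff_neq0; move: hp; rewrite nYP.
Qed.
End Fin.

Theorem claim2p7 (K : closedFieldType) (k : nat) (d : Order.disp_t)
    (W : orderType d) (hW : is_omega1 W)
    (C : W -> nat -> W) (hC : ladder_system C)
    (M : rmod K k) (pi : Fmod K k W -> M)
    (hM : @realizes_Momega1 K k d W C M pi) :
  ext1_nonzero M (@freeact K k W).
Proof.
exists (EE hM), (iEE hM), (@piEE _ _ _ _ _ _ _ hM).
split; first split.
- exact: iE_hom.
- exact: piE_hom.
- exact: iE_inj.
- exact: piE_surj.
- move=> e; exact: (piE_ker hC).
- exact: (nonsplit hW hC).
Qed.
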